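(* Consider a budget-additive NSW instance with $v_{ij}\le c_i$ for all $i,j$ whose associated market ${\mathcal M}$ is money clearing, let $({\mathbf x},{\mathbf p})$ be a thrifty and modest equilibrium of ${\mathcal M}$, and let $v',c'$ be the normalized values and caps (see context), with normalized valuations $v'_i(S_i)=\min(c'_i,\sum_{j\in S_i}v'_{ij})$. Let $B_c$ be the set of buyers capped in $({\mathbf x},{\mathbf p})$. Then for every integral allocation $S^*$ (in particular one maximizing the Nash social welfare w.r.t. $v'$), $$\Big(\prod_{i\in B}v'_i(S^*_i)\Big)^{1/n}\le\Big(\prod_{i\in B_c}c'_i\prod_{j\in G:\,p_j>1}p_j\Big)^{1/n}.$$
   Context: Budget-additive NSW instance: agents $B$ ($|B|=n$), indivisible items $G$ ($|G|=m\ge n$), values $v_{ij}\ge0$, caps $c_i>0$, valuation $v_i(S_i)=\min(c_i,\sum_{j\in S_i}v_{ij})$; NSW of an allocation is $(\prod_i v_i(S_i))^{1/n}$. Associated market ${\mathcal M}$: Fisher market with buyer $i$ per agent, divisible unit-supply good $j$ per item, budget $m_i=1$, value $u_{ij}=v_{ij}$, utility cap $c_i$, earning cap $d_j=1$. Fisher market with earning and utility limits: buyers $B$, divisible goods $G$ each with unit supply; buyer $i$ has values $u_{ij}\ge0$, budget $m_i\ge0$, utility cap $c_i>0$; good $j$ has earning cap $d_j>0$. For a bundle ${\mathbf x}_i$ with $x_{ij}\ge0$, $u_i({\mathbf x}_i)=\min(c_i,\sum_j u_{ij}x_{ij})$. Given prices ${\mathbf p}\ge0$, the MBB ratio is $\alpha_i=\max_j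 u_{ij}/p_j$ ($0/0=0$, $u/0=\infty$ for $u>0$); $j$ is an MBB good of $i$ if $u_{ij}/p_j=\alpha_i$. A demand bundle maximizes $u_i({\mathbf x}_i)$ subject to $\sum_j p_jx_{ij}\le m_i$; thrifty: $x_{ij}>0$ only for MBB goods; modest: $\sum_ju_{ij}x_{ij}\le c_i$. Modest supply: $e_j=\min(1,d_j/p_j)$ ($=1$ if $p_j=0$). A thrifty and modest equilibrium is $({\mathbf x},{\mathbf p})$ with ${\mathbf p}\ge0$, $x_j=\sum_ix_{ij}\le e_j$, each ${\mathbf x}_i$ a thrifty and modest demand bundle, and $p_j(e_j-x_j)=0$. Buyer $i$ is capped if $u_i({\mathbf x}_i)=c_i$. Money clearing: for all $\hat B\subseteq B$, $\sum_{i\in\hat B}m_i\le\sum_{j\in N(\hat B)}d_j$, $N(\hat B)=\{j:u_{ij}>0\text{ for some }i\in\hat B\}$. Normalization: $G_0=\{j:p_j=0\}$, $B_0=\{i:v_{ij}>0\text{ for some }j\in G_0\}$. For $i\notin B_0$ with MBB ratio $\alpha_i$ at ${\mathbf p}$, $v'_{ij}=v_{ij}/\alpha_i$ and $c'_i=c_i/\alpha_i$; for $i\in B_0$, $v'_{ij}=v_{ij}$ and $c'_i=c_i$. *)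

(* Defs.v *)
From Stdlib Require Import Reals.
From mathcomp Require Import all_boot.
Set Implicit Arguments. Unset Strict Implicit. Unset Printing Implicit Defensive.

Open Scope R_scope.

Definition Reqb (x y : R) : bool := if Req_EM_T x y then true else false.
Definition Rltb (x y : R) : bool := if Rlt_dec x y then true else false.

Notation "\rsum_ ( i | P ) F" := (\big[Rplus/R0]_(i | P) F)
  (at level 41, F at level 41, i, P at level 50) : R_scope.
Notation "\rsum_ i F" := (\big[Rplus/R0]_i F)
  (at level 41, F at level 41, i at level 0) : R_scope.
Notation "\rprod_ ( i | P ) F" := (\big[Rmult/R1]_(i | P) F)
  (at level 36, F at level 36, i, P at level 50) : R_scope.
Notation "\rprod_ i F" := (\big[Rmult/R1]_i F)
  (at level 36, F at level 36, i at level 0) : R_scope.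

Definition nroot (n : nat) (x : R) : R :=
  if Req_EM_T x 0 then 0 else Rpower x (/ INR n).

(* Extended nonnegative reals, for bang-per-buck ratios (u/0 = oo for u > 0). *)
Inductive ext := Fin of R | Inf.
Definition ext_le (a b : ext) : Prop :=
  match a, b with
  | _, Inf => True
  | Inf, Fin _ => False
  | Fin x, Fin y => x <= y
  end.
Definition ext_max (a b : ext) : ext :=
  match a, b with
  | Inf, _ => Inf
  | _, Inf => Inf
  | Fin x, Fin y => Fin (Rmax x y)
  end.
(* ratio u/p with 0/0 = 0 and u/0 = oo for u > 0 (u >= 0 assumed) *)
Definition ratio (u p : R) : ext :=
  if Req_EM_T p 0 then (if Rlt_dec 0 u then Inf else Fin 0) else Fin (u / p).

Section Market.
Variables (B G : finType).

(* u : values, mb : budgets, c : utility caps, d : earning caps *)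

Definition mkt_utility (u : B -> G -> R) (c : B -> R) (i : B) (y : G -> R) : R :=
  Rmin (c i) (\rsum_j (u i j * y j)).

Definition spend (p : G -> R) (y : G -> R) : R := \rsum_j (p j * y j).

Definition mbb_ratio (u : B -> G -> R) (p : G -> R) (i : B) : ext :=
  \big[ext_max/Fin 0]_j ratio (u i j) (p j).

Definition is_mbb (u : B -> G -> R) (p : G -> R) (i : B) (j : G) : Prop :=
  ratio (u i j) (p j) = mbb_ratio u p i.

Definition demand_bundle (u : B -> G -> R) (mb c : B -> R) (p : G -> R)
    (i : B) (y : G -> R) : Prop :=
  (forall j, 0 <= y j) /\ spend p y <= mb i /\
  (forall z : G -> R, (forall j, 0 <= z j) -> spend p z <= mb i ->
      mkt_utility u c i z <= mkt_utility u c i y).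

Definition thrifty (u : B -> G -> R) (p : G -> R) (i : B) (y : G -> R) : Prop :=
  forall j, 0 < y j -> is_mbb u p i j.

Definition modest (u : B -> G -> R) (c : B -> R) (i : B) (y : G -> R) : Prop :=
  \rsum_j (u i j * y j) <= c i.

Definition modest_supply (d p : G -> R) (j : G) : R :=
  if Req_EM_T (p j) 0 then 1 else Rmin 1 (d j / p j).

Definition thrifty_modest_eq (u : B -> G -> R) (mb c : B -> R) (d : G -> R)
    (x : B -> G -> R) (p : G -> R) : Prop :=
  (forall j, 0 <= p j) /\
  (forall j, \rsum_i x i j <= modest_supply d p j) /\
  (forall i, demand_bundle u mb c p i (x i) /\ thrifty u p i (x i)
             /\ modest u c i (x i)) /\
  (forall j, p j * (modest_supply d p j - \rsum_i x i j) = 0).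

Definition capped (u : B -> G -> R) (c : B -> R) (x : B -> G -> R) (i : B) : bool :=
  Reqb (mkt_utility u c i (x i)) (c i).

Definition nbhd (u : B -> G -> R) (Bh : {set B}) : {set G} :=
  [set j | [exists i in Bh, Rltb 0 (u i j)]].

Definition money_clearing (u : B -> G -> R) (mb : B -> R) (d : G -> R) : Prop :=
  forall Bh : {set B}, \rsum_(i | i \in Bh) mb i <= \rsum_(j | j \in nbhd u Bh) d j.

(* associated market: budgets 1, values v, caps c, earning caps 1 *)
Definition one_B : B -> R := fun _ => 1.
Definition one_G : G -> R := fun _ => 1.

Definition ba_val (v : B -> G -> R) (c : B -> R) (i : B) (S : {set G}) : R :=
  Rmin (c i) (\rsum_(j | j \in S) v i j).

Definition allocation (S : B -> {set G}) : Prop :=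
  forall i k, i != k -> [disjoint S i & S k].

Definition NSW (v : B -> G -> R) (c : B -> R) (S : B -> {set G}) : R :=
  nroot #|B| (\rprod_i ba_val v c i (S i)).

Definition in_B0 (v : B -> G -> R) (p : G -> R) (i : B) : bool :=
  [exists j, Reqb (p j) 0 && Rltb 0 (v i j)].

Definition fin_part (a : ext) : R := match a with Fin r => r | Inf => 0 end.

Definition norm_v (v : B -> G -> R) (p : G -> R) (i : B) (j : G) : R :=
  if in_B0 v p i then v i j else v i j / fin_part (mbb_ratio v p i).

Definition norm_c (v : B -> G -> R) (c : B -> R) (p : G -> R) (i : B) : R :=
  if in_B0 v p i then c i else c i / fin_part (mbb_ratio v p i).

End Market.

(* Main.v *)
Require Import Defs.
From Stdlib Require Import Reals Lra Lia.
From HB Require Import structures.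
From mathcomp Require Import all_boot.
Open Scope R_scope.

HB.instance Definition _ := Monoid.isComLaw.Build R R0 Rplus (fun a b c => esym (Rplus_assoc a b c)) Rplus_comm Rplus_0_l.
HB.instance Definition _ := Monoid.isComLaw.Build R R1 Rmult (fun a b c => esym (Rmult_assoc a b c)) Rmult_comm Rmult_1_l.

Lemma sum_le (I : Type) (r : seq I) (P : pred I) (F1 F2 : I -> R) :
  (forall i, P i -> F1 i <= F2 i) ->
  \big[Rplus/R0]_(i <- r | P i) F1 i <= \big[Rplus/R0]_(i <- r | P i) F2 i.
Proof. move=> H; apply: (big_ind2 (fun a b => a <= b)) => //; [lra| move=> *; lra]. Qed.

Lemma prod_le (I : Type) (r : seq I) (P : pred I) (F1 F2 : I -> R) :
  (forall i, P i -> 0 <= F1 i <= F2 i) ->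
  0 <= \big[Rmult/R1]_(i <- r | P i) F1 i <= \big[Rmult/R1]_(i <- r | P i) F2 i.
Proof. move=> H; apply: (big_ind2 (fun a b => 0 <= a <= b)) => //; [lra| move=> *; nra]. Qed.

Lemma sum_ge0 (I : Type) (r : seq I) (P : pred I) (F : I -> R) :
  (forall i, P i -> 0 <= F i) -> 0 <= \big[Rplus/R0]_(i <- r | P i) F i.
Proof. move=> H; apply: (big_ind (fun a => 0 <= a)) => //; [lra| move=> *; lra]. Qed.

Lemma prod_ge0 (I : Type) (r : seq I) (P : pred I) (F : I -> R) :
  (forall i, P i -> 0 <= F i) -> 0 <= \big[Rmult/R1]_(i <- r | P i) F i.
Proof. move=> H; apply: (big_ind (fun a => 0 <= a)) => //; [lra| move=> *; nra]. Qed.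

Lemma key_sum (I : Type) (r : seq I) (P : pred I) (p : I -> R) :
  (forall j, 0 <= p j) ->
  \big[Rplus/R0]_(j <- r | P j) p j <=
  \big[Rmult/R1]_(j <- r | P j) Rmax (p j) 1 * \big[Rplus/R0]_(j <- r | P j) Rmin (p j) 1.
Proof.
move=> Hp.
have := (big_ind3 (fun a P g => 0 <= a /\ 1 <= P /\ 0 <= g /\ a <= P * g)
  (id1:=R0) (op1:=Rplus) (id2:=R1) (op2:=Rmult) (id3:=R0) (op3:=Rplus)).
move=> /(_ _ _ _ r P p (fun j => Rmax (p j) 1) (fun j => Rmin (p j) 1)) H.
have : 0 <= \big[Rplus/R0]_(j <- r | P j) p j /\ 1 <= \big[Rmult/R1]_(j <- r | P j) Rmax (p j) 1 /\
  0 <= \big[Rplus/R0]_(j <- r | P j) Rmin (p j) 1 /\ \big[Rplus/R0]_(j <- r | P j) p j <=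
  \big[Rmult/R1]_(j <- r | P j) Rmax (p j) 1 * \big[Rplus/R0]_(j <- r | P j) Rmin (p j) 1.
  apply: H.
  - lra.
  - move=> x1 x2 x3 y1 y2 y3 [? [? [? ?]]] [? [? [? ?]]]; do !split; nra.
  - move=> i _; have := Hp i; unfold Rmax, Rmin; destruct (Rle_dec (p i) 1); do !split; nra.
by case=> _ [_ [_ ]].
Qed.

Lemma exp_sum (I : Type) (r : seq I) (P : pred I) (F : I -> R) :
  exp (\big[Rplus/R0]_(i <- r | P i) F i) = \big[Rmult/R1]_(i <- r | P i) exp (F i).
Proof. apply: big_morph; [move=> x y; apply: exp_plus | exact: exp_0]. Qed.

Lemma mul_sum (I : Type) (r : seq I) (P : pred I) (F : I -> R) a :
  a * (\big[Rplus/R0]_(i <- r | P i) F i) = \big[Rplus/R0]_(i <- r | P i) (a * F i).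
Proof. apply: big_morph => [x y|]; ring. Qed.

Lemma nroot_ge0 n x : 0 <= nroot n x.
Proof. rewrite /nroot; case: Req_EM_T => _ /=; [lra|]; unfold Rpower; left; apply exp_pos. Qed.

Lemma exp_le x y : x <= y -> exp x <= exp y.
Proof. case=> H; [left; exact: exp_increasing | rewrite H; lra]. Qed.

Lemma nroot_le n x y : 0 <= x <= y -> nroot n x <= nroot n y.
Proof.
move=> [H1 H2]; rewrite /nroot; destruct (Req_EM_T x 0); first by apply nroot_ge0.
destruct (Req_EM_T y 0); first lra.
unfold Rpower; apply exp_le; apply Rmult_le_compat_l.
  destruct n; [rewrite /= Rinv_0; lra| left; apply Rinv_0_lt_compat, lt_0_INR; lia].
case: (Rle_lt_or_eq_dec _ _ H2) => H; [left; apply ln_increasing; lra| rewrite H; lra].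
Qed.
Lemma prod_ge1 (I : Type) (r : seq I) (P : pred I) (F : I -> R) :
  (forall i, P i -> 1 <= F i) -> 1 <= \big[Rmult/R1]_(i <- r | P i) F i.
Proof. move=> H; apply: (big_ind (fun a => 1 <= a)) => //; [lra| move=> *; nra]. Qed.

Lemma prod_excl (T : finType) (Q : pred T) (a : R) :
  (forall i k, Q i -> Q k -> i = k) -> 1 <= a ->
  \big[Rmult/R1]_(i : T) (if Q i then a else R1) <= a.
Proof.
move=> HQ Ha; case: (pickP Q) => [i0 Hi0|none].
  rewrite (bigD1 i0) //= Hi0 big1; first lra.
  move=> k Hk; case Qk: (Q k) => //.
  by move: Hk; rewrite (HQ _ _ Qk Hi0) eqxx.
rewrite big1; first lra.
by move=> k _; rewrite none.
Qed.

Lemma sum_excl (T : finType) (Q : pred T) (a : R) :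
  (forall i k, Q i -> Q k -> i = k) -> 0 <= a ->
  \big[Rplus/R0]_(i : T) (if Q i then a else R0) <= a.
Proof.
move=> HQ Ha; case: (pickP Q) => [i0 Hi0|none].
  rewrite (bigD1 i0) //= Hi0 big1; first lra.
  move=> k Hk; case Qk: (Q k) => //.
  by move: Hk; rewrite (HQ _ _ Qk Hi0) eqxx.
rewrite big1; first lra.
by move=> k _; rewrite none.
Qed.

Lemma ext_le_trans a b d : ext_le a b -> ext_le b d -> ext_le a d.
Proof. case: a; case: b; case: d => //= *; lra. Qed.

Lemma ext_le_maxl a b : ext_le a (ext_max a b).
Proof. case: a; case: b => //= *; apply Rmax_l. Qed.

Lemma ext_le_maxr a b : ext_le b (ext_max a b).
Proof. case: a; case: b => //= *; apply Rmax_r. Qed.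

Lemma big_ext_inf (T : eqType) (s : seq T) (F : T -> ext) j :
  j \in s -> F j = Inf -> \big[ext_max/Fin 0]_(k <- s) F k = Inf.
Proof.
elim: s => // a s IH; rewrite inE big_cons => /orP [/eqP <- -> //|Hj HF].
by rewrite IH //; case: (F a).
Qed.

Lemma big_ext_ge (T : eqType) (s : seq T) (F : T -> ext) j :
  j \in s -> ext_le (F j) (\big[ext_max/Fin 0]_(k <- s) F k).
Proof.
elim: s => // a s IH; rewrite inE big_cons => /orP [/eqP <-|Hj].
  exact: ext_le_maxl.
apply: ext_le_trans (IH Hj) _; exact: ext_le_maxr.
Qed.

Lemma big_ext_fin (T : eqType) (s : seq T) (F : T -> ext) :
  (forall k, exists r, F k = Fin r /\ 0 <= r) ->
  exists a, \big[ext_max/Fin 0]_(k <- s) F k = Fin a /\ 0 <= a.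
Proof.
move=> H; apply: (big_ind (fun e => exists a, e = Fin a /\ 0 <= a)).
- exists 0; split => //; lra.
- move=> e1 e2 [a1 [-> ?]] [a2 [-> ?]]; exists (Rmax a1 a2); split => //.
  apply: Rle_trans (Rmax_l _ _); lra.
- by move=> k _; apply: H.
Qed.

Lemma ReqbP x y : Reqb x y = true -> x = y.
Proof. by rewrite /Reqb; case: Req_EM_T. Qed.
Lemma ReqbT x y : x = y -> Reqb x y = true.
Proof. by rewrite /Reqb; case: Req_EM_T. Qed.
Lemma RltbP x y : Rltb x y = true -> x < y.
Proof. by rewrite /Rltb; case: Rlt_dec. Qed.
Lemma RltbF x y : Rltb x y = false -> ~ x < y.
Proof. by rewrite /Rltb; case: Rlt_dec. Qed.
Lemma capped_arith s P g f :
  0 < s <= 1 -> 1 <= P -> 0 <= g -> f <= s -> f <= P * g -> f <= P * s * exp (g - s).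
Proof.
move=> Hs HP Hg Hf1 Hf2.
case: (Rle_lt_dec s g) => Hgs.
  have : 1 <= exp (g - s) by have := exp_ineq1_le (g - s); lra.
  move=> He; have HPe : 1 <= P * exp (g - s) by nra.
  have : s <= s * (P * exp (g - s)) by nra.
  lra.
have H1 : g / s <= exp (g / s - 1) by have := exp_ineq1_le (g / s - 1); lra.
have H2 : g / s - 1 <= g - s.
  have -> : g / s - 1 = (g - s) * / s by field; lra.
  have : 1 <= / s.
    rewrite -Rinv_1; apply Rinv_le_contravar; lra.
  move=> Hi; nra.
have H3 := exp_le _ _ H2.
have H4 : g <= s * exp (g - s).
  have E : s * (g / s) = g by field; lra.
  have : s * (g / s) <= s * exp (g - s) by apply Rmult_le_compat_l; lra.
  lra.
nra.
Qed.

Lemma uncapped_arith s P g f :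
  0 <= s <= 1 -> 1 <= P -> 0 <= g -> f <= P * g -> f <= P * R1 * exp (g - s).
Proof.
move=> Hs HP Hg Hf.
have H1 : g <= exp (g - 1) by have := exp_ineq1_le (g - 1); lra.
have H2 := exp_le _ _ (Rplus_le_compat_l g _ _ (Ropp_le_contravar _ _ (proj2 Hs))).
rewrite /Rminus in H1 *; nra.
Qed.

Lemma Rdiv_le_0_compat a b : 0 <= a -> 0 < b -> 0 <= a / b.
Proof. move=> Ha Hb; unfold Rdiv; apply Rmult_le_pos => //; left; apply Rinv_0_lt_compat, Hb. Qed.

Lemma pos_of_ne x : 0 <= x -> x <> 0 -> 0 < x.
Proof. move=> H1 H2; case: (Rle_lt_or_eq_dec _ _ H1) => // H; by exfalso; apply: H2. Qed.
Lemma buyer_bound (B G : finType) (v : B -> G -> R) (c : B -> R) (x : B -> G -> R)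
  (p : G -> R) (i : B) (S : {set G})
  (Hv : forall i j, 0 <= v i j) (Hc : forall i, 0 < c i) (Hp : forall j, 0 <= p j)
  (Hx : forall j, 0 <= x i j) (Hsp : spend p (x i) <= 1)
  (Hdem : forall z : G -> R, (forall j, 0 <= z j) -> spend p z <= 1 ->
      mkt_utility v c i z <= mkt_utility v c i (x i))
  (Hthr : thrifty v p i (x i)) (Hmod : modest v c i (x i)) :
  0 <= ba_val (norm_v v p) (norm_c v c p) i S /\
  ba_val (norm_v v p) (norm_c v c p) i S <=
    (\rprod_(j | j \in S) Rmax (p j) 1) *
    (if capped v c x i then norm_c v c p i else R1) *
    exp ((\rsum_(j | j \in S) Rmin (p j) 1) - spend p (x i)) /\
  0 <= (if capped v c x i then norm_c v c p i else R1).
Proof.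
set P := \rprod_(j | j \in S) Rmax (p j) 1.
set g := \rsum_(j | j \in S) Rmin (p j) 1.
set s := spend p (x i).
have HP : 1 <= P by apply: prod_ge1 => j _; apply Rmax_r.
have Hg : 0 <= g by apply: sum_ge0 => j _; have := Hp j; unfold Rmin; destruct Rle_dec; lra.
have Hs0 : 0 <= s by apply: sum_ge0 => j _; have := Hp j; have := Hx j; nra.
have HT : \rsum_(j | j \in S) p j <= P * g by apply: key_sum.
rewrite /ba_val /norm_v /norm_c.
case HB0: (in_B0 v p i).
-
  move: HB0 => /existsP [j0 /andP [/ReqbP Hp0 /RltbP Hv0]].
  have Hcap : capped v c x i.
    apply: ReqbT.
    set z := fun k => if k == j0 then c i / v i j0 else 0.
    have Hz : forall k, 0 <= z k.
      move=> k; rewrite /z; case: eqP => _; last lra.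
      apply Rdiv_le_0_compat; [have := Hc i; lra| lra].
    have Hsz : spend p z <= 1.
      rewrite /spend big1; first lra.
      move=> k _; rewrite /z; case: eqP => [->|_]; [rewrite Hp0|]; ring.
    have Huz : mkt_utility v c i z = c i.
      rewrite /mkt_utility (bigD1 j0) //= big1 /z ?eqxx.
        have -> : v i j0 * (c i / v i j0) + R0 = c i by field; lra.
        unfold Rmin; destruct Rle_dec; lra.
      by move=> k /negbTE ->; ring.
    have := Hdem z Hz Hsz; rewrite Huz.
    have := Rmin_l (c i) (\rsum_j (v i j * x i j)); rewrite /mkt_utility; lra.
  rewrite Hcap.
  have Hinf : mbb_ratio v p i = Inf.
    apply: (@big_ext_inf _ _ _ j0); first exact: mem_index_enum.
    rewrite /ratio; destruct (Req_EM_T (p j0) 0) as [e|n]; last (exfalso; lra).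
    by destruct (Rlt_dec 0 (v i j0)); last (exfalso; lra).
  have Hs : s = 0.
    rewrite /s /spend big1 // => j _.
    case: (Rle_lt_or_eq_dec _ _ (Hx j)) => Hxj; last by rewrite -Hxj; ring.
    have := Hthr j Hxj; rewrite /is_mbb Hinf /ratio.
    destruct (Req_EM_T (p j) 0) as [e|n] => //= _; rewrite e; ring.
  have Hsum : 0 <= \rsum_(j | j \in S) v i j by apply: sum_ge0.
  have Hmin1 := Rmin_l (c i) (\rsum_(j | j \in S) v i j).
  have Hmin0 : 0 <= Rmin (c i) (\rsum_(j | j \in S) v i j).
    unfold Rmin; destruct Rle_dec; have := Hc i; lra.
  have He : 1 <= exp (g - s) by rewrite Hs; have := exp_ineq1_le (g - 0); lra.
  have := Hc i => Hci.
  split; first exact: Hmin0.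
  split; last lra.
  have : 1 <= P * exp (g - s) by nra.
  move=> H1; nra.
-
  have Hnb : forall j, p j = 0 -> v i j = 0.
    move=> j Hpj; have := Hv i j; case: (Rle_lt_or_eq_dec _ _ (Hv i j)) => // Hlt _.
    move/negbT/negP: HB0 => HB0; exfalso; apply: HB0; rewrite /in_B0; apply/existsP; exists j.
    by rewrite ReqbT //= /Rltb; case: Rlt_dec.
  have Hrat : forall j, ratio (v i j) (p j) = Fin (if Req_EM_T (p j) 0 then 0 else v i j / p j).
    move=> j; rewrite /ratio; destruct (Req_EM_T (p j) 0) as [e|n] => //=.
    rewrite (Hnb j e); destruct (Rlt_dec 0 0) => //; lra.
  have [a [Ha Ha0]] : exists a, mbb_ratio v p i = Fin a /\ 0 <= a.
    apply: big_ext_fin => k; rewrite Hrat; eexists; split; first reflexivity.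
    destruct (Req_EM_T (p k) 0) as [e|n] => /=; first lra.
    apply Rdiv_le_0_compat; [exact: Hv| exact: pos_of_ne].
  rewrite Ha /=.
  have Hva : forall j, v i j <= a * p j.
    move=> j; have := @big_ext_ge _ _ (fun j => ratio (v i j) (p j)) j (mem_index_enum j).
    rewrite -/(mbb_ratio v p i) Ha Hrat /=.
    case: Req_EM_T => [Hpj|Hpj] /= H; first by rewrite (Hnb j Hpj) Hpj; lra.
    have Hpp : 0 < p j by exact: pos_of_ne.
    have : v i j = (v i j / p j) * p j by field; lra.
    move=> ->; apply Rmult_le_compat_r; lra.
  have Hvn : forall j, 0 <= v i j / a <= p j.
    move=> j; case: (Rle_lt_or_eq_dec _ _ Ha0) => Ha1.
      split; first by apply Rdiv_le_0_compat; [exact: Hv|lra].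
      have := Hva j => H; apply (Rmult_le_reg_l a); first lra.
      have -> : a * (v i j / a) = v i j by field; lra.
      lra.
    rewrite -Ha1 /Rdiv Rinv_0 Rmult_0_r; split; [lra| exact: Hp].
  have HU : \rsum_j (v i j * x i j) = a * s.
    rewrite /s /spend mul_sum; apply: eq_bigr => j _.
    case: (Rle_lt_or_eq_dec _ _ (Hx j)) => Hxj; last by rewrite -Hxj; ring.
    have := Hthr j Hxj; rewrite /is_mbb Ha Hrat.
    case: Req_EM_T => [Hpj|Hpj] [E]; first by rewrite (Hnb j Hpj) Hpj; ring.
    rewrite -E; field; lra.
  have Hsv : \rsum_(j | j \in S) (v i j / a) <= P * g.
    apply: Rle_trans HT; apply: sum_le => j _; exact: proj2 (Hvn j).
  have Hsv0 : 0 <= \rsum_(j | j \in S) (v i j / a) by apply: sum_ge0 => j _; exact: proj1 (Hvn j).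
  have Hmr := Rmin_r (c i / a) (\rsum_(j | j \in S) (v i j / a)).
  have Hml := Rmin_l (c i / a) (\rsum_(j | j \in S) (v i j / a)).
  case Hcap: (capped v c x i).
  + move: Hcap; rewrite /capped /mkt_utility => /ReqbP Hcap.
    have HUc : a * s = c i.
      rewrite -HU; move: Hcap Hmod; rewrite /modest; unfold Rmin; destruct Rle_dec; lra.
    have Hci := Hc i.
    have Hapos : 0 < a by case: (Rle_lt_or_eq_dec _ _ Ha0) => // Ha1; rewrite -Ha1 in HUc; lra.
    have Hca : c i / a = s by rewrite -HUc; field; lra.
    have Hspos : 0 < s by nra.
    rewrite Hca in Hml Hmr *.
    have Hmin0 : 0 <= Rmin s (\rsum_(j | j \in S) (v i j / a)).
      unfold Rmin; destruct Rle_dec; lra.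
    split => //; split; last lra.
    apply: capped_arith => //; lra.
  + have Hca0 : 0 <= c i / a.
      case: (Rle_lt_or_eq_dec _ _ Ha0) => Ha1.
        apply Rdiv_le_0_compat; [have := Hc i; lra| lra].
      rewrite -Ha1 /Rdiv Rinv_0 Rmult_0_r; lra.
    have Hmin0 : 0 <= Rmin (c i / a) (\rsum_(j | j \in S) (v i j / a)).
      unfold Rmin; destruct Rle_dec; lra.
    split => //; split; last lra.
    apply: uncapped_arith => //; lra.
Qed.

Theorem mainTheorem3 (B G : finType) (v : B -> G -> R) (c : B -> R)
  (x : B -> G -> R) (p : G -> R)
  (Hn : (0 < #|B|)%N) (Hnm : (#|B| <= #|G|)%N)
  (Hv : forall i j, 0 <= v i j) (Hc : forall i, 0 < c i)
  (Hvc : forall i j, v i j <= c i)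
  (Hmc : money_clearing v (@one_B B) (@one_G G))
  (Heq : thrifty_modest_eq v (@one_B B) c (@one_G G) x p)
  (S : B -> {set G}) (HS : allocation S) :
  NSW (norm_v v p) (norm_c v c p) S <=
  nroot #|B|
    ((\rprod_(i | capped v c x i) norm_c v c p i) *
     (\rprod_(j | Rltb 1 (p j)) p j)).
Proof.
move: Heq => [Hp [Hsup [Hbuy Hcs]]].
have Hbb := fun i => let: conj (conj Hx (conj Hsp Hdem)) (conj Hthr Hmod) := Hbuy i in
   @buyer_bound B G v c x p i (S i) Hv Hc Hp Hx Hsp Hdem Hthr Hmod.
have Huniq : forall j i k, j \in S i -> j \in S k -> i = k.
  move=> j i k Hi Hk; apply/eqP; apply/negPn/negP => Hne.
  by have := disjointFr (HS _ _ Hne) Hi; rewrite Hk.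
rewrite /NSW; apply: nroot_le; split.
  apply: prod_ge0 => i _; exact: (proj1 (Hbb i)).
set Pi := fun i => \rprod_(j | j \in S i) Rmax (p j) 1.
set Ai := fun i => if capped v c x i then norm_c v c p i else R1.
set gi := fun i => \rsum_(j | j \in S i) Rmin (p j) 1.
set si := fun i => spend p (x i).
have Hle : \rprod_i ba_val (norm_v v p) (norm_c v c p) i (S i) <=
    \rprod_i (Pi i * Ai i * exp (gi i - si i)).
  apply: (proj2 (@prod_le _ (index_enum B) (fun _ => true) _ _ _)).
  move=> i _; have [H1 [H2 _]] := Hbb i; split => //.
apply: Rle_trans Hle _.
rewrite big_split big_split /= -exp_sum.
have HPge : 1 <= \rprod_i Pi i.
  apply: prod_ge1 => i _; apply: prod_ge1 => j _; exact: Rmax_r.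
have HA0 : 0 <= \rprod_i Ai i by apply: prod_ge0 => i _; exact: (proj2 (proj2 (Hbb i))).
have HP : \rprod_i Pi i <= \rprod_(j | Rltb 1 (p j)) p j.
  rewrite /Pi; under eq_bigr => i _ do rewrite big_mkcond.
  rewrite exchange_big /= [X in _ <= X]big_mkcond /=.
  apply: (proj2 (@prod_le _ (index_enum G) (fun _ => true) _ _ _)) => j _.
  have HM : Rmax (p j) 1 = if Rltb 1 (p j) then p j else R1.
    rewrite /Rltb /Rmax; case: Rlt_dec; case: Rle_dec => /=; lra.
  split; first by apply: prod_ge0 => i _; case: (j \in S i); [apply: Rle_trans (Rmax_r _ _)|]; lra.
  rewrite -HM; apply: (@prod_excl _ (fun i => j \in S i)); last exact: Rmax_r.
  move=> i k; exact: Huniq.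
have Hg : \rsum_i gi i <= \rsum_j Rmin (p j) 1.
  rewrite /gi; under eq_bigr => i _ do rewrite big_mkcond.
  rewrite exchange_big /=.
  apply: (@sum_le _ (index_enum G) (fun _ => true)) => j _.
  apply: (@sum_excl _ (fun i => j \in S i)); first by move=> i k; exact: Huniq.
  have := Hp j; unfold Rmin; destruct Rle_dec; lra.
have Hs : \rsum_j Rmin (p j) 1 <= \rsum_i si i.
  rewrite /si /spend exchange_big /=.
  apply: (@sum_le _ (index_enum G) (fun _ => true)) => j _.
  rewrite -mul_sum.
  have := Hsup j; have := Hcs j; have := Hp j; rewrite /modest_supply /one_G.
  destruct (Req_EM_T (p j) 0) as [e|n] => /=.
    rewrite e; unfold Rmin; destruct Rle_dec; lra.
  move=> Hpj0 Hcsj Hsupj; have Hpj := pos_of_ne _ Hpj0 n.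
  have E : Rmin 1 (1 / p j) = \rsum_i x i j.
    case: (Rmult_integral _ _ Hcsj) => H; [lra|lra].
  rewrite -E; unfold Rmin; destruct (Rle_dec 1 (1 / p j)); destruct (Rle_dec (p j) 1).
  - lra.
  - have : p j * (1 / p j) = 1 by field; lra.
    have : 1 <= p j * (1 / p j) by nra.
    lra.
  - have : p j * (1 / p j) = 1 by field; lra.
    lra.
  - have : p j * (1 / p j) = 1 by field; lra.
    lra.
have Hgs : \rsum_i (gi i - si i) <= 0.
  have E : \rsum_i (gi i - si i) + \rsum_i si i = \rsum_i gi i.
    rewrite -big_split /=; apply: eq_bigr => i _; ring.
  lra.
have HE : 0 <= exp (\rsum_i (gi i - si i)) <= 1.
  split; first by left; apply exp_pos.
  rewrite -exp_0; exact: exp_le.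
have -> : \rprod_(i | capped v c x i) norm_c v c p i = \rprod_i Ai i.
  by rewrite big_mkcond.
set PP := \rprod_i Pi i in HPge HP *; set AA := \rprod_i Ai i in HA0 *.
set EE := exp _ in HE *; set QQ := \rprod_(j | Rltb 1 (p j)) p j in HP *.
have H0 : 0 <= PP * AA by nra.
have H1 : PP * AA * EE <= PP * AA by nra.
have H2 : PP * AA <= QQ * AA by nra.
lra.
Qed.
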